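(* Let $n^*_1,n^*_2\ge1$, $n^*=n^*_1+n^*_2$, and let $\psi$ be a log-convex Archimedean generator with $\phi=\psi^{-1}$. Let $X_1,\dots,X_{n^*}$ be dependent nonnegative random variables sharing an Archimedean copula with generator $\psi$, with $X_i\sim F_1(\lambda_1x)$ for $i\le n^*_1$ and $X_j\sim F_2(\lambda_2x)$ for $j>n^*_1$; let $Y_1,\dots,Y_{n^*}$ be dependent nonnegative random variables sharing an Archimedean copula with generator $\psi$, with $Y_i\sim F_1(\mu_1x)$ for $i\le n^*_1$ and $Y_j\sim F_2(\mu_2x)$ for $j>n^*_1$ ($\lambda_k,\mu_k>0$). Let $X_{n^*:n^*}(n^*_1,n^*_2)=\max_iX_i$, $Y_{n^*:n^*}(n^*_1,n^*_2)=\max_iY_i$, and write $\boldsymbol\lambda^*=(\lambda_1,\dots,\lambda_1,\lambda_2,\dots,\lambda_2)$, $\boldsymbol\mu^*=(\mu_1,\dots,\mu_1,\mu_2,\dots,\mu_2)$ (with $n^*_1$ copies of the first entry and $n^*_2$ of the second). Let either (a) $n^*_1\ge n^*_2$ and $\boldsymbol\lambda=(\lambda_1,\lambda_2),\boldsymbol\mu=(\mu_1,\mu_2)\in\mathcal E_+$, or (b) $n^*_1\le n^*_2$ and $\boldsymbol\lambda,\boldsymbol\mu\in\mathcal D_+$. Then: (i) if $\tilde r_1$ or $\tilde r_2$ is decreasing and $\tilde r_1(x)\ge\tilde r_2(x)$ for all $x>0$ in case (a) (respectively $\tilde r_1(x)\le\tilde r_2(x)$ for all $x>0$ in case (b)),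 then $\boldsymbol\lambda^*\succeq^w\boldsymbol\mu^*$ implies $Y_{n^*:n^*}(n^*_1,n^*_2)\le_{st}X_{n^*:n^*}(n^*_1,n^*_2)$; (ii) if $\tilde r_1=\tilde r_2=\tilde r$ and $\tilde r$ is decreasing, then $\boldsymbol\lambda^*\succeq^w\boldsymbol\mu^*$ implies $Y_{n^*:n^*}(n^*_1,n^*_2)\le_{st}X_{n^*:n^*}(n^*_1,n^*_2)$.
   Context: $Z\sim F(\lambda x)$ means $Z$ has distribution function $x\mapsto F(\lambda x)$. Archimedean copula: a generator is a continuous nonincreasing $\psi:[0,\infty)\to[0,1]$ with $\psi(0)=1$, $\psi(\infty)=0$, which is $m$-monotone; $\phi=\psi^{-1}$; $Z_1,\dots,Z_m$ with marginal distribution functions $G_i$ share an Archimedean copula with generator $\psi$ if $P(Z_1\le z_1,\dots,Z_m\le z_m)=\psi(\sum_i\phi(G_i(z_i)))$. $F_1,F_2$ are absolutely continuous distribution functions on $[0,\infty)$ with densities $f_k$ and reversed hazard rates $\tilde r_k=f_k/F_k$. $\mathcal E_+=\{(x_1,x_2):0<x_1\le x_2\}$, $\mathcal D_+=\{(x_1,x_2):x_1\ge x_2>0\}$. For $\boldsymbol a,\boldsymbol b\in\mathbb R^k$ with increasingly ordered coordinates: $\boldsymbol a\succeq^w\boldsymbol b$ means $\sum_{i=1}^lb_{(i)}\ge\sum_{i=1}^la_{(i)}$ for all $l$. $U\le_{st}V$ means $P(U>x)\le P(V>x)$ for all $x$. Increasing/decreasing are in the weak sense. *)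

(* Defs.v *)
From HB Require Import structures.
From mathcomp Require Import all_boot all_order all_algebra.
From mathcomp Require Import all_classical all_reals all_analysis.
Set Implicit Arguments. Unset Strict Implicit. Unset Printing Implicit Defensive.
Import Order.TTheory GRing.Theory Num.Theory.
Import numFieldNormedType.Exports.
Local Open Scope classical_set_scope.
Local Open Scope ring_scope.

Definition convex_pos {R : realType} (g : R -> R) : Prop :=
  forall x y t : R, 0 < x -> 0 < y -> 0 <= t <= 1 ->
    g (t * x + (1 - t) * y) <= t * g x + (1 - t) * g y.

(* m-monotonicity on [0,oo) (McNeil--Neslehova): psi is continuous on [0,oo),
   differentiable on (0,oo) up to order m-2, (-1)^k psi^(k) >= 0 on (0,oo) for
   k = 0..m-2, and (-1)^(m-2) psi^(m-2) is nonincreasing and convex on (0,oo). *)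
Definition m_monotone {R : realType} (m : nat) (psi : R -> R) : Prop :=
  {within `[0, +oo[, continuous psi} /\
  (forall k : nat, (k < m - 2)%N -> forall x : R, 0 < x ->
      derivable (derive1n k psi) x 1) /\
  (forall k : nat, (k <= m - 2)%N -> forall x : R, 0 < x ->
      0 <= (-1) ^+ k * derive1n k psi x) /\
  (forall x y : R, 0 < x -> x <= y ->
      (-1) ^+ (m - 2) * derive1n (m - 2) psi y
        <= (-1) ^+ (m - 2) * derive1n (m - 2) psi x) /\
  convex_pos (fun x => (-1) ^+ (m - 2) * derive1n (m - 2) psi x).

Definition arch_generator {R : realType} (m : nat) (psi : R -> R) : Prop :=
  {within `[0, +oo[, continuous psi} /\
  (forall x y : R, 0 <= x -> x <= y -> psi y <= psi x) /\
  (forall x : R, 0 <= x -> 0 <= psi x <= 1) /\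
  psi 0 = 1 /\
  psi x @[x --> +oo] --> (0:R) /\
  m_monotone m psi.

Definition log_convex {R : realType} (psi : R -> R) : Prop :=
  (forall x : R, 0 <= x -> 0 < psi x) /\
  (forall x y t : R, 0 <= x -> 0 <= y -> 0 <= t <= 1 ->
     ln (psi (t * x + (1 - t) * y)) <= t * ln (psi x) + (1 - t) * ln (psi y)).

(* phi is the inverse of psi (psi being strictly positive, phi is defined on (0,1]). *)
Definition is_inverse_gen {R : realType} (psi phi : R -> R) : Prop :=
  (forall t : R, 0 <= t -> phi (psi t) = t) /\
  (forall u : R, 0 < u <= 1 -> 0 <= phi u /\ psi (phi u) = u).

Definition abs_cont_df {R : realType} (F f : R -> R) : Prop :=
  measurable_fun setT f /\
  (forall x : R, 0 <= f x) /\
  (forall x : R, x < 0 -> F x = 0) /\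
  (forall x : R, 0 <= x ->
     (\int[lebesgue_measure]_(y in `[0%R, x]%classic) (f y)%:E)%E = (F x)%:E) /\
  F x @[x --> +oo] --> (1:R).

Definition rev_hazard {R : realType} (F f : R -> R) (x : R) : R := f x / F x.

Definition decreasing_pos {R : realType} (g : R -> R) : Prop :=
  forall x y : R, 0 < x -> x <= y -> g y <= g x.

(* Marginal df of the i-th variable: F1(l1 x) for i < n1, F2(l2 x) otherwise
   (indices are 0-based: i < n1 corresponds to the paper's i <= n1). *)
Definition mix_df {R : realType} (F1 F2 : R -> R) (n1 : nat) (l1 l2 : R)
    (i : nat) (x : R) : R :=
  if (i < n1)%N then F1 (l1 * x) else F2 (l2 * x).

(* The copula identity is required where all G_i(z_i) > 0;
   when some G_i(z_i) = 0 both sides vanish (psi(+oo) = 0, and the joint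
   probability is 0 by the marginal condition). *)
Definition arch_copula_model {R : realType} {d : measure_display}
    {T : measurableType d} (P : probability T R) (n : nat)
    (X : 'I_n -> T -> R) (G : nat -> R -> R) (psi phi : R -> R) : Prop :=
  (forall i : 'I_n, measurable_fun setT (X i)) /\
  (forall (i : 'I_n) (x : R), P [set t | X i t <= x] = (G i x)%:E) /\
  (forall z : 'I_n -> R, (forall i : 'I_n, 0 < G i (z i)) ->
     P [set t | forall i : 'I_n, X i t <= z i]
       = (psi (\sum_(i < n) phi (G i (z i))))%:E).

Definition maxRV {R : realType} {T : Type} (n : nat) (X : 'I_n -> T -> R)
    (t : T) : R := \big[Num.max/0]_(i < n) X i t.

Definition wsupmaj {R : realType} (a b : seq R) : Prop :=
  size a = size b /\
  forall l : nat, (l <= size a)%N ->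
    \sum_(i < l) nth 0 (sort <=%R a) i <= \sum_(i < l) nth 0 (sort <=%R b) i.

Definition st_le {R : realType} {d1 d2 : measure_display}
    {T1 : measurableType d1} {T2 : measurableType d2}
    (P1 : probability T1 R) (U : T1 -> R)
    (P2 : probability T2 R) (V : T2 -> R) : Prop :=
  forall x : R, (P1 [set t | (x < U t)%R] <= P2 [set t | (x < V t)%R])%E.

(* Main.v *)
Require Import Defs.
From HB Require Import structures.
From mathcomp Require Import all_boot all_order all_algebra.
From mathcomp Require Import all_classical all_reals all_analysis.
Import Order.TTheory GRing.Theory Num.Theory.
Local Open Scope ring_scope.

From mathcomp Require Import ring lra measurable_realfun.
Set Warnings "-notation-overridden,-parsing,-deprecated,-ambiguous-paths".
Import numFieldNormedType.Exports.

Section A.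
Variable R : realType.

Lemma ln_sub_le (x y : R) : 0 < x -> 0 < y -> ln y - ln x <= y / x - 1.
Proof.
move=> x0 y0; rewrite -ln_div ?posrE //.
have h : -1 < y / x - 1 by rewrite ltrBrDl subrr divr_gt0.
by have := le_ln1Dx h; rewrite addrC subrK.
Qed.

Lemma step_up (a b u : R) : 0 < a -> 0 < b -> 0 <= u -> u <= 1/2 ->
  b * (1 - u) <= a -> ln b - ln a <= u + 2 * u ^+ 2.
Proof.
move=> a0 b0 u0 u1 h.
apply: le_trans (@ln_sub_le a b a0 b0) _.
rewrite lerBlDl ler_pdivrMr //.
have h1 : 0 < 1 - u by lra.
have e : (1 + (u + 2 * u^+2)) * (1 - u) = 1 + u^+2 * (1 - 2 * u).
  by rewrite !expr2; ring.
have h2 : 1 <= (1 + (u + 2 * u^+2)) * (1 - u).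
  rewrite e lerDl mulr_ge0 // ?sqr_ge0 //; lra.
have : b * (1 - u) <= a * ((1 + (u + 2 * u ^+ 2)) * (1 - u)).
  apply: le_trans h _; rewrite ler_peMr //; lra.
by move=> H; rewrite -(ler_pM2r h1) (le_trans H) // mulrA [a * _]mulrC.
Qed.

Lemma step_low (a b v : R) : 0 < a -> 0 < b -> 0 <= v ->
  a * (1 + v) <= b -> v - v ^+ 2 <= ln b - ln a.
Proof.
move=> a0 b0 v0 h.
have := @ln_sub_le b a b0 a0.
have hv : 0 < 1 + v by lra.
have e : (1 - v + v^+2) * (1 + v) = 1 + v ^+ 3 by rewrite !exprS expr0; ring.
have : a / b <= 1 - v + v ^+ 2.
  rewrite ler_pdivrMr // -(ler_pM2r hv) (le_trans _ (_ : b * (1 + v ^+ 3) <= _)) //.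
    rewrite (le_trans h) // ler_peMr //; first by apply: ltW.
    by rewrite lerDl exprn_ge0.
  by rewrite -e mulrA [b * _]mulrC.
lra.
Qed.
End A.
Arguments ln_sub_le {R x y}. Arguments step_up {R a b u}. Arguments step_low {R a b v}.
Section A2.
Variable R : realType.

Lemma alem_N (s t : R) (F1 F2 rho : R -> R) (N : nat) :
  s <= t -> (0 < N)%N ->
  (forall y, s <= y -> y <= t -> 0 < F1 y /\ 0 < F2 y) ->
  (forall a b, s <= a -> a <= b -> b <= t -> rho b <= rho a) ->
  (forall y, s <= y -> y <= t -> 0 <= rho y) ->
  (forall a b, s <= a -> a <= b -> b <= t -> F1 a * (1 + rho b * (b - a)) <= F1 b) ->
  (forall a b, s <= a -> a <= b -> b <= t -> F2 b * (1 - rho a * (b - a)) <= F2 a) ->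
  rho s * ((t - s) / N%:R) <= 1/2 ->
  (ln (F2 t) - ln (F2 s)) - (ln (F1 t) - ln (F1 s)) <=
    (rho s - rho t) * ((t - s) / N%:R) + N%:R * (3 * (rho s * ((t - s) / N%:R)) ^+ 2).
Proof.
move=> st N0 Fpos rhod rho0 h1 h2 small.
set h := (t - s) / N%:R.
have Nr : 0 < N%:R :> R by rewrite ltr0n.
have h0 : 0 <= h by rewrite divr_ge0 // ?subr_ge0 // ltW.
have hN : N%:R * h = t - s by rewrite /h mulrC divfK // gt_eqF.
pose y (k : nat) := s + k%:R * h.
have yb : forall k, (k <= N)%N -> s <= y k /\ y k <= t.
  move=> k kN; split; first by rewrite /y lerDl mulr_ge0.
  by rewrite /y -lerBrDl -hN ler_wpM2r // ler_nat.
set q := rho s * h.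
have q0 : 0 <= q by rewrite mulr_ge0 // rho0.
have claim : forall k, (k <= N)%N ->
  (ln (F2 (y k)) - ln (F2 s)) - (ln (F1 (y k)) - ln (F1 s)) <=
    (rho s - rho (y k)) * h + k%:R * (3 * q ^+ 2).
  elim=> [|k IH] kN.
    rewrite /y !mulr0n !mul0r addr0 !subrr mul0r; lra.
  have kN' : (k <= N)%N by apply: ltnW.
  have [ya yat] := yb _ kN'; have [yb1 ybt] := yb _ kN.
  have yab : y k <= y k.+1 by rewrite /y lerD2l ler_wpM2r // ler_nat.
  have hab : y k.+1 - y k = h.
    by rewrite /y -natr1; ring.
  have [F1a F2a] := Fpos _ ya yat.
  have [F1b F2b] := Fpos _ (le_trans ya yab) ybt.
  have rab := rhod _ _ ya yab ybt.
  have rsa := rhod _ _ (lexx s) ya yat.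
  have ra0 := rho0 _ ya yat.
  have rb0 := rho0 _ (le_trans ya yab) ybt.
  set u := rho (y k) * h; set v := rho (y k.+1) * h.
  have u0 : 0 <= u by rewrite mulr_ge0.
  have v0 : 0 <= v by rewrite mulr_ge0.
  have uq : u <= q by rewrite ler_wpM2r.
  have vu : v <= u by rewrite ler_wpM2r.
  have := h2 _ _ ya yab ybt; rewrite hab -/u.
  move=> /(step_up F2a F2b u0 (le_trans uq small)) up.
  have := h1 _ _ ya yab ybt; rewrite hab -/v.
  move=> /(step_low F1a F1b v0) low.
  have uq2 : u ^+ 2 <= q ^+ 2 by rewrite ler_pXn2r // nnegrE.
  have vq2 : v ^+ 2 <= q ^+ 2 by rewrite ler_pXn2r // ?nnegrE // (le_trans vu).
  have := IH kN'.
  have -> : k.+1%:R * (3 * q^+2) = k%:R * (3 * q^+2) + 3 * q^+2 :> R.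
    by rewrite -natr1; ring.
  have e1 : (rho s - rho (y k)) * h + u = (rho s - rho (y k.+1)) * h + v.
    by rewrite /u /v; ring.
  lra.
have := claim N (leqnn N).
have -> : y N = t by rewrite /y hN addrC subrK.
by [].
Qed.
End A2.
Arguments alem_N {R s t F1 F2 rho N}.
Section A3.
Variable R : realType.

Lemma alem (s t : R) (F1 F2 rho : R -> R) :
  s <= t ->
  (forall y, s <= y -> y <= t -> 0 < F1 y /\ 0 < F2 y) ->
  (forall a b, s <= a -> a <= b -> b <= t -> rho b <= rho a) ->
  (forall y, s <= y -> y <= t -> 0 <= rho y) ->
  (forall a b, s <= a -> a <= b -> b <= t -> F1 a * (1 + rho b * (b - a)) <= F1 b) ->
  (forall a b, s <= a -> a <= b -> b <= t -> F2 b * (1 - rho a * (b - a)) <= F2 a) ->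
  ln (F2 t) - ln (F2 s) <= ln (F1 t) - ln (F1 s).
Proof.
move=> st Fpos rhod rho0 h1 h2.
rewrite -subr_le0; set D := _ - _.
rewrite leNgt; apply/negP => D0.
set C := (rho s - rho t) * (t - s) + 3 * rho s ^+ 2 * (t - s) ^+ 2.
have rs0 := rho0 _ (lexx s) st.
have rts := rhod _ _ (lexx s) st (lexx t).
have C0 : 0 <= C.
  rewrite /C addr_ge0 // ?mulr_ge0 ?subr_ge0 // ?sqr_ge0 //.
set K := C / D + 2 * rho s * (t - s).
have K0 : 0 <= K.
  rewrite /K addr_ge0 //; first by rewrite divr_ge0 // ltW.
  by rewrite mulr_ge0 ?subr_ge0 // mulr_ge0.
have KN := archi_boundP K0.
set N := Num.bound K in KN.
have N0 : (0 < N)%N.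
  by rewrite -(ltr_nat R); apply: le_lt_trans KN.
have Nr : 0 < N%:R :> R by rewrite ltr0n.
have small : rho s * ((t - s) / N%:R) <= 1/2.
  rewrite mulrA ler_pdivrMr //.
  have : 2 * rho s * (t - s) <= N%:R.
    apply: ltW; apply: le_lt_trans KN; rewrite /K lerDr divr_ge0 // ltW //.
  nra.
have := alem_N st N0 Fpos rhod rho0 h1 h2 small.
rewrite -/D.
have -> : (rho s - rho t) * ((t - s) / N%:R) +
    N%:R * (3 * (rho s * ((t - s) / N%:R)) ^+ 2) = C / N%:R.
  rewrite /C; field; by rewrite gt_eqF.
rewrite ler_pdivlMr // => H.
have : C / D < N%:R by apply: le_lt_trans KN; rewrite /K lerDl mulr_ge0 ?mulr_ge0 ?subr_ge0.
rewrite ltr_pdivrMr // => H2.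
by have := le_lt_trans H H2; rewrite mulrC ltxx.
Qed.
End A3.
Arguments alem {R s t F1 F2 rho}.
Section Q.
Variable R : realType.

Lemma expR_1m (x : R) : expR x * (1 - x) <= 1.
Proof.
have h := expR_ge1Dx (- x).
have e : expR x * expR (- x) = 1 by rewrite -expRD subrr expR0.
rewrite -e ler_wpM2l ?expR_ge0 //; lra.
Qed.

Lemma CG_low {Fa : R -> R} {s t c : R} : s <= t -> 0 <= c ->
  (forall y, s <= y -> y <= t -> 0 < Fa y) ->
  (forall a b, s <= a -> a <= b -> b <= t -> Fa a * (1 + c * (b - a)) <= Fa b) ->
  c * (t - s) <= ln (Fa t) - ln (Fa s).
Proof.
move=> st c0 pos h.
have := @alem R s t Fa (fun y => expR (c * y)) (fun _ => c) st
  (fun y sy yt => conj (pos y sy yt) (expR_gt0 _))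
  (fun _ _ _ _ _ => lexx c) (fun _ _ _ => c0) h.
rewrite !expRK => H.
have -> : c * (t - s) = c * t - c * s by ring.
apply: H => a b _ ab _.
have -> : c * b = c * a + c * (b - a) by ring.
rewrite expRD -mulrA; apply: ler_piMr; first exact: ltW (expR_gt0 _).
exact: expR_1m.
Qed.

Lemma CG_up {Fb : R -> R} {s t c : R} : s <= t -> 0 <= c ->
  (forall y, s <= y -> y <= t -> 0 < Fb y) ->
  (forall a b, s <= a -> a <= b -> b <= t -> Fb b * (1 - c * (b - a)) <= Fb a) ->
  ln (Fb t) - ln (Fb s) <= c * (t - s).
Proof.
move=> st c0 pos h.
have := @alem R s t (fun y => expR (c * y)) Fb (fun _ => c) st
  (fun y sy yt => conj (expR_gt0 _) (pos y sy yt))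
  (fun _ _ _ _ _ => lexx c) (fun _ _ _ => c0).
rewrite !expRK => H.
have -> : c * (t - s) = c * t - c * s by ring.
apply: H => // a b _ ab _.
have -> : c * b = c * a + c * (b - a) by ring.
rewrite expRD ler_wpM2l ?expR_ge0 //.
exact: expR_ge1Dx.
Qed.
End Q.
Arguments CG_low {R Fa s t c}. Arguments CG_up {R Fb s t c}.
Section M.
Variable R : realType.
Local Open Scope classical_set_scope.
Notation mu := (@lebesgue_measure R).

Lemma acd_mf (F f : R -> R) (D : set R) : abs_cont_df F f ->
  measurable_fun D (EFin \o f).
Proof.
move=> [mf _]; apply/measurable_EFinP.
exact: measurable_funS mf.
Qed.

Lemma acd_split (F f : R -> R) (a b : R) : abs_cont_df F f -> 0 <= a -> a <= b ->
  ((F b)%:E = (F a)%:E + \int[mu]_(y in `]a, b]) (f y)%:E)%E.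
Proof.
move=> hF a0 ab; have [mf [f0 [_ [hI _]]]] := hF.
rewrite -(hI b (le_trans a0 ab)) -(hI a a0).
rewrite (@itv_bndbnd_setU _ _ (BLeft 0) (BRight a) (BRight b)) //.
rewrite ge0_integral_setU //=.
- exact: acd_mf hF.
- by move=> y _; rewrite lee_fin.
apply/disj_setPS => y [] /=; rewrite !in_itv /= => /andP [_ ya] /andP [ay _].
by move: (lt_le_trans ay ya); rewrite ltxx.
Qed.
End M.
Arguments acd_split {R F f a b}. Arguments acd_mf {R F f D}.
Section M2.
Variable R : realType.
Local Open Scope classical_set_scope.
Notation mu := (@lebesgue_measure R).

Lemma acd_ge0 {F f : R -> R} {x : R} : abs_cont_df F f -> 0 <= F x.
Proof.
move=> hF; have [mf [f0 [hn [hI _]]]] := hF.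
have [x0|x0] := ltP x 0; first by rewrite hn.
rewrite -lee_fin -hI //; apply: integral_ge0 => y _; by rewrite lee_fin.
Qed.

Lemma acd_int {F f : R -> R} {a b : R} : abs_cont_df F f -> 0 <= a -> a <= b ->
  (\int[mu]_(y in `]a, b]) (f y)%:E)%E = (F b - F a)%:E.
Proof.
move=> hF a0 ab; have hs := acd_split hF a0 ab.
have : (0 <= \int[mu]_(y in `]a, b]) (f y)%:E)%E.
  by apply: integral_ge0 => y _; case: hF => _ [f0 _]; rewrite lee_fin.
move: hs; case: (\int[mu]_(y in `]a, b]) (f y)%:E)%E => //.
by move=> r [->] _; congr (_%:E); ring.
Qed.

Lemma acd_mono {F f : R -> R} {a b : R} : abs_cont_df F f -> a <= b -> F a <= F b.
Proof.
move=> hF ab; have [mf [f0 [hn [hI _]]]] := hF.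
have [a0|a0] := ltP a 0; first by rewrite hn // (acd_ge0 hF).
rewrite -subr_ge0 -lee_fin -(acd_int hF a0 ab).
by apply: integral_ge0 => y _; rewrite lee_fin.
Qed.

Lemma acd_up {F f : R -> R} {a b c : R} : abs_cont_df F f -> 0 <= a -> a <= b ->
  0 <= c -> (forall y, a < y -> y <= b -> f y <= c * F y) ->
  F b - F a <= c * (b - a) * F b.
Proof.
move=> hF a0 ab c0 hy.
have [ab'|] := ltP a b; last first.
  move=> ba; have -> : a = b by apply/eqP; rewrite eq_le ab ba.
  by rewrite !subrr mulr0 mul0r.
rewrite -lee_fin -(acd_int hF a0 ab).
apply: (@le_trans _ _ (\int[mu]_(y in `]a, b]) (cst (c * F b)%:E) y)%E).
  apply: ge0_le_integral => //.
  - by move=> y _; case: hF => _ [f0 _]; rewrite lee_fin.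
  - exact: acd_mf hF.
  - move=> y; rewrite /= in_itv /= => /andP [ay yb]; rewrite lee_fin.
    apply: le_trans (hy _ ay yb) _; rewrite ler_wpM2l //.
    exact: acd_mono hF yb.
rewrite integral_cst //.
have hm : (mu `]a, b] = (b - a)%:E)%E.
  by rewrite lebesgue_measure_itv /= lte_fin ab' -EFinD.
rewrite -[X in (_ * X)%E]/(mu `]a, b]) hm -EFinM lee_fin; lra.
Qed.

Lemma acd_low {F f : R -> R} {a b c : R} : abs_cont_df F f -> 0 <= a -> a <= b ->
  0 <= c -> (forall y, a < y -> y <= b -> c * F y <= f y) ->
  c * (b - a) * F a <= F b - F a.
Proof.
move=> hF a0 ab c0 hy.
have [ab'|] := ltP a b; last first.
  move=> ba; have -> : a = b by apply/eqP; rewrite eq_le ab ba.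
  by rewrite !subrr mulr0 mul0r.
rewrite -lee_fin -(acd_int hF a0 ab).
apply: (@le_trans _ _ (\int[mu]_(y in `]a, b]) (cst (c * F a)%:E) y)%E); last first.
  apply: ge0_le_integral => //.
  - by move=> y _; rewrite lee_fin mulr_ge0 // (acd_ge0 hF).
  - exact: acd_mf hF.
  - move=> y; rewrite /= in_itv /= => /andP [ay yb]; rewrite lee_fin.
    apply: le_trans (hy _ ay yb); rewrite ler_wpM2l //.
    exact: acd_mono hF (ltW ay).
rewrite integral_cst //.
have hm : (mu `]a, b] = (b - a)%:E)%E.
  by rewrite lebesgue_measure_itv /= lte_fin ab' -EFinD.
rewrite -[X in (_ * X)%E]/(mu `]a, b]) hm -EFinM lee_fin; lra.
Qed.

Lemma acd_F0 {F f : R -> R} : abs_cont_df F f -> F 0 = 0.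
Proof.
move=> hF; have [mf [f0 [hn [hI _]]]] := hF.
apply/eqP; rewrite -(@eqe R) -hI // set_itv1 integral_set1 //.
Qed.
End M2.
Arguments acd_ge0 {R F f x}. Arguments acd_int {R F f a b}. Arguments acd_mono {R F f a b}.
Arguments acd_up {R F f a b c}. Arguments acd_low {R F f a b c}. Arguments acd_F0 {R F f}.
Section M3.
Variable R : realType.
Local Open Scope classical_set_scope.
Notation mu := (@lebesgue_measure R).

Lemma acd_left_zero {F f : R -> R} {q z : R} : abs_cont_df F f -> 0 < q -> q < z ->
  (forall x, q < x -> x < z -> F x = 0) -> F z = 0.
Proof.
move=> hF q0 qz hx.
have [mf [f0 [hn [hI _]]]] := hF.
have z0 : 0 < z by apply: lt_trans qz.
have intf : mu.-integrable `[0, z] (EFin \o f).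
  apply/integrableP; split; first exact: acd_mf hF.
  under eq_integral => x _ do rewrite /comp abse_EFin ger0_norm ?f0 //.
  by rewrite hI ?ltW // ltry.
have H := parameterized_integral_cvg_at_left z0 intf.
have H2 : parameterized_integral mu 0 x f @[x --> z^'-] --> 0.
  apply: cvg_near_cst; near=> x.
  have xq : q < x by near: x; exact: nbhs_left_gt.
  have xz : x < z by near: x; exact: nbhs_left_lt.
  rewrite /parameterized_integral /Rintegral hI; last by apply/ltW/(lt_trans q0).
  by rewrite /= hx.
have := cvg_unique (@Rhausdorff R) H H2.
move=> <-; rewrite /parameterized_integral /Rintegral.
by rewrite -[LHS]/(fine (F z)%:E) -hI ?ltW.
Unshelve. all: by end_near.
Qed.
End M3.
Arguments acd_left_zero {R F f q z}.
Section M4.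
Variable R : realType.
Local Open Scope classical_set_scope.

Lemma acd_pos_back {F f : R -> R} {q p c : R} : abs_cont_df F f -> 0 < q -> q <= p ->
  0 <= c -> (forall y, q < y -> y <= p -> 0 < F y -> f y <= c * F y) ->
  0 < F p -> 0 < F q.
Proof.
move=> hF q0 qp c0 hy Fp.
have := @acd_ge0 _ _ _ q hF; rewrite le_eqVlt => /orP [/eqP Fq0|//].
exfalso.
pose S := [set y : R | q <= y /\ y <= p /\ F y = 0].
have Sq : S q by split => //; split.
have hS : has_sup S.
  split; first by exists q.
  by exists p => y [_ [yp _]].
set z := sup S.
have zub := sup_upper_bound hS.
have qz : q <= z by apply: zub.
have zp : z <= p by apply: ge_sup; [exists q | move=> y [_ [yp _]]].
have Fpos : forall y, z < y -> y <= p -> 0 < F y.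
  move=> y zy yp; have := @acd_ge0 _ _ _ y hF.
  rewrite le_eqVlt => /orP [/eqP Fy0|//].
  have : S y by split; [apply: le_trans qz (ltW zy) | split].
  by move=> /zub; rewrite leNgt zy.
have Fbelow : forall y, q <= y -> y < z -> F y = 0.
  move=> y qy yz.
  have zy0 : 0 < z - y by rewrite subr_gt0.
  have [e [qe [ep Fe]] ze] := sup_adherent zy0 hS.
  rewrite -/z opprB addrC subrK in ze.
  apply/eqP; rewrite eq_le (acd_ge0 hF) andbT -Fe.
  by apply: acd_mono hF (ltW ze).
have Fz0 : F z = 0.
  move: qz; rewrite le_eqVlt => /orP [/eqP <-|qz]; first by rewrite Fq0.
  apply: (acd_left_zero hF q0 qz) => x qx xz; exact: Fbelow (ltW qx) xz.
have zp' : z < p.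
  rewrite lt_neqAle zp andbT; apply/negP => /eqP zpe.
  by move: Fp; rewrite -zpe Fz0 ltxx.
set d := Num.min (p - z) (1 / (c + 1)).
have d0 : 0 < d by rewrite lt_min subr_gt0 zp' /= divr_gt0 //; lra.
have dp : d <= p - z by rewrite ge_min lexx.
have dc : d <= 1 / (c + 1) by rewrite ge_min lexx orbT.
set b := z + d.
have zb : z < b by rewrite /b ltrDl.
have bp : b <= p by rewrite /b -lerBrDl.
have z0 : 0 <= z by apply: le_trans (ltW q0) qz.
have := acd_up hF z0 (ltW zb) c0 (fun y zy yb => hy y (le_lt_trans qz zy) (le_trans yb bp) (Fpos y zy (le_trans yb bp))).
have bz : b - z = d by rewrite /b addrC addKr.
rewrite Fz0 subr0 bz.
have Fb := Fpos b zb bp.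
have cd : c * d < 1.
  apply: le_lt_trans (_ : c * (1 / (c + 1)) < 1).
    by rewrite ler_wpM2l.
  rewrite mulrA mulr1 ltr_pdivrMr; lra.
nra.
Qed.
End M4.
Arguments acd_pos_back {R F f q p c}.
Section FL.
Local Open Scope classical_set_scope.
Variable R : realType.

Lemma per_low {Fa fa rho : R -> R} {a b : R} : abs_cont_df Fa fa ->
  (forall x z, 0 < x -> x <= z -> rho z <= rho x) -> (forall x, 0 < x -> 0 <= rho x) ->
  (forall x, 0 < x -> 0 < Fa x -> rho x * Fa x <= fa x) ->
  0 < a -> a <= b -> 0 < Fa a -> Fa a * (1 + rho b * (b - a)) <= Fa b.
Proof.
move=> hF rd r0 hr a0 ab Fa0.
have := @acd_low R Fa fa a b (rho b) hF (ltW a0) ab (r0 _ (lt_le_trans a0 ab)).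
have H : forall y, a < y -> y <= b -> rho b * Fa y <= fa y.
  move=> y ay yb; have y0 : 0 < y by apply: lt_trans ay.
  have Fy : 0 < Fa y by apply: lt_le_trans Fa0 (acd_mono hF (ltW ay)).
  apply: le_trans (hr _ y0 Fy); rewrite ler_wpM2r // ?rd // ltW //.
move=> /(_ H); lra.
Qed.

Lemma per_up {Fb fb rho : R -> R} {a b : R} : abs_cont_df Fb fb ->
  (forall x z, 0 < x -> x <= z -> rho z <= rho x) -> (forall x, 0 < x -> 0 <= rho x) ->
  (forall x, 0 < x -> 0 < Fb x -> fb x <= rho x * Fb x) ->
  0 < a -> a <= b -> 0 < Fb a -> Fb b * (1 - rho a * (b - a)) <= Fb a.
Proof.
move=> hF rd r0 hr a0 ab Fb0.
have := @acd_up R Fb fb a b (rho a) hF (ltW a0) ab (r0 _ a0).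
have H : forall y, a < y -> y <= b -> fb y <= rho a * Fb y.
  move=> y ay yb; have y0 : 0 < y by apply: lt_trans ay.
  have Fy : 0 < Fb y by apply: lt_le_trans Fb0 (acd_mono hF (ltW ay)).
  apply: le_trans (hr _ y0 Fy) _; rewrite ler_wpM2r // ?rd // ltW //.
move=> /(_ H); lra.
Qed.

Lemma Fle {Fa fa Fb fb rho : R -> R} {y : R} : abs_cont_df Fa fa -> abs_cont_df Fb fb ->
  (forall x z, 0 < x -> x <= z -> rho z <= rho x) -> (forall x, 0 < x -> 0 <= rho x) ->
  (forall x, 0 < x -> 0 < Fa x -> rho x * Fa x <= fa x) ->
  (forall x, 0 < x -> 0 < Fb x -> fb x <= rho x * Fb x) ->
  0 < y -> 0 < Fa y -> 0 < Fb y -> Fa y <= Fb y.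
Proof.
move=> hA hB rd r0 ha hb y0 Fay Fby.
have key : forall T, y <= T -> ln (Fa y) - ln (Fb y) <= Fa T / Fb T - 1.
  move=> T yT.
  have pos : forall x, y <= x -> x <= T -> 0 < Fa x /\ 0 < Fb x.
    move=> x yx _; split.
      exact: lt_le_trans Fay (acd_mono hA yx).
    exact: lt_le_trans Fby (acd_mono hB yx).
  have := @alem R y T Fa Fb rho yT pos
    (fun a b ya ab _ => rd a b (lt_le_trans y0 ya) ab)
    (fun x yx _ => r0 x (lt_le_trans y0 yx))
    (fun a b ya ab bT => per_low hA rd r0 ha (lt_le_trans y0 ya) ab (pos a ya (le_trans ab bT)).1)
    (fun a b ya ab bT => per_up hB rd r0 hb (lt_le_trans y0 ya) ab (pos a ya (le_trans ab bT)).2).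
  have [pa pb] := pos T yT (lexx T).
  have := @ln_sub_le R (Fb T) (Fa T) pb pa.
  lra.
have hA1 := hA.2.2.2.2; have hB1 := hB.2.2.2.2.
have hg : (fun T => Fa T / Fb T - 1) @ +oo --> (0 : R).
  have -> : (0 : R) = 1 * 1^-1 - 1 by rewrite invr1 mulr1 subrr.
  apply: cvgB; last exact: cvg_cst.
  apply: cvgM => //; apply: cvgV => //; exact: oner_neq0.
have : ln (Fa y) - ln (Fb y) <= 0.
  rewrite -(cvg_lim (@Rhausdorff R) hg).
  apply: limr_ge; first by apply/cvg_ex; exists 0.
  near=> T; apply: key; near: T; apply: nbhs_pinfty_ge; exact: num_real.
rewrite subr_le0 ler_ln ?posrE //.
Unshelve. all: by end_near.
Qed.
End FL.
Arguments per_low {R Fa fa rho a b}. Arguments per_up {R Fb fb rho a b}. Arguments Fle {R Fa fa Fb fb rho y}.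
Section P.
Variable R : realType.
Variables psi phi : R -> R.
Hypothesis hdec : forall x y : R, 0 <= x -> x <= y -> psi y <= psi x.
Hypothesis hlc : log_convex psi.
Hypothesis hinv : is_inverse_gen psi phi.

Lemma psi_le_inv {A B : R} : 0 <= A -> 0 <= B -> psi A <= psi B -> B <= A.
Proof.
move=> A0 B0 hAB; rewrite leNgt; apply/negP => AB.
have e : psi A = psi B by apply/eqP; rewrite eq_le hAB hdec // ltW.
have := hinv.1 _ A0; rewrite e hinv.1 // => eAB.
by move: AB; rewrite eAB ltxx.
Qed.

Lemma phi_ge0 {u : R} : 0 < u -> u <= 1 -> 0 <= phi u.
Proof. by move=> u0 u1; have [] := hinv.2 u; [rewrite u0 u1|]. Qed.

Lemma psi_phi {u : R} : 0 < u -> u <= 1 -> psi (phi u) = u.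
Proof. by move=> u0 u1; have [] := hinv.2 u; [rewrite u0 u1|]. Qed.

Lemma phi_anti {u v : R} : 0 < u -> u <= v -> v <= 1 -> phi v <= phi u.
Proof.
move=> u0 uv v1.
have v0 : 0 < v by apply: lt_le_trans uv.
apply: psi_le_inv; rewrite ?phi_ge0 // ?(le_trans uv) //.
by rewrite !psi_phi // (le_trans uv).
Qed.

Definition G (v : R) := phi (expR (- v)).

Lemma expN_in {v : R} : 0 <= v -> 0 < expR (- v) /\ expR (- v) <= 1.
Proof.
move=> v0; split; first exact: expR_gt0.
by rewrite -expR0 ler_expR lerNl oppr0.
Qed.

Lemma G_ge0 {v : R} : 0 <= v -> 0 <= G v.
Proof. by move=> v0; have [h1 h2] := expN_in v0; rewrite /G phi_ge0. Qed.

Lemma G_mono {v w : R} : 0 <= v -> v <= w -> G v <= G w.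
Proof.
move=> v0 vw; have [h1 h2] := expN_in v0; have [h3 h4] := expN_in (le_trans v0 vw).
by rewrite /G phi_anti // ler_expR lerN2.
Qed.

Lemma phi_G {u : R} : 0 < u -> u <= 1 -> phi u = G (- ln u).
Proof. by move=> u0 u1; rewrite /G opprK lnK. Qed.

Lemma G_convex {x y t : R} : 0 <= x -> 0 <= y -> 0 <= t <= 1 ->
  G (t * x + (1 - t) * y) <= t * G x + (1 - t) * G y.
Proof.
move=> x0 y0 t01; have /andP [t0 t1] := t01.
have z0 : 0 <= t * x + (1 - t) * y by rewrite addr_ge0 // mulr_ge0 // subr_ge0.
have [ex1 ex2] := expN_in x0; have [ey1 ey2] := expN_in y0.
have [ez1 ez2] := expN_in z0.
apply: psi_le_inv; first by rewrite addr_ge0 // mulr_ge0 ?subr_ge0 // G_ge0.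
  exact: G_ge0.
rewrite /G psi_phi //.
have := hlc.2 (G x) (G y) t (G_ge0 x0) (G_ge0 y0) (t01).
rewrite /G !psi_phi // !expRK => hl.
have p0 : 0 < psi (t * phi (expR (- x)) + (1 - t) * phi (expR (- y))).
  by apply: hlc.1; rewrite addr_ge0 // mulr_ge0 ?subr_ge0 // phi_ge0.
rewrite -(lnK p0) ler_expR; apply: (le_trans hl); lra.
Qed.

Lemma G_3pt {a b c : R} : 0 <= a -> a <= b -> b <= c ->
  (G b - G a) * (c - b) <= (G c - G b) * (b - a).
Proof.
move=> a0 ab bc.
have [ac|] := ltP a c; last first.
  move=> ca; have ea : a = b by apply/eqP; rewrite eq_le ab (le_trans bc ca).
  by rewrite ea !subrr !mul0r mulr0.
set t := (c - b) / (c - a).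
have ca0 : 0 < c - a by rewrite subr_gt0.
have t0 : 0 <= t by apply: divr_ge0; lra.
have t1 : t <= 1 by rewrite ler_pdivrMr // mul1r; lra.
have t01 : 0 <= t <= 1 by rewrite t0 t1.
have eb : b = t * a + (1 - t) * c.
  rewrite /t; field; by rewrite gt_eqF.
have := G_convex a0 (le_trans a0 (le_trans ab bc)) (t01).
rewrite -eb => h.
have e1 : 1 - t = (b - a) / (c - a) by rewrite /t; field; rewrite gt_eqF.
rewrite e1 /t in h.
have h2 := ler_wpM2r (ltW ca0) h.
have e2 : ((c - b) / (c - a) * G a + (b - a) / (c - a) * G c) * (c - a)
    = (c - b) * G a + (b - a) * G c by field; rewrite gt_eqF.
rewrite e2 in h2.
lra.
Qed.
Lemma G_4pt {u2 w2 u1 w1 : R} : 0 <= u2 -> u2 <= w2 -> w2 <= u1 -> u1 <= w1 ->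
  (G w2 - G u2) * (w1 - u1) <= (G w1 - G u1) * (w2 - u2).
Proof.
move=> u20 uw2 wu uw1.
have w20 : 0 <= w2 by apply: le_trans uw2.
have i := G_3pt u20 uw2 (le_trans wu uw1).
have ii0 := G_3pt w20 wu uw1.
have ii : (G w1 - G w2) * (w1 - u1) <= (G w1 - G u1) * (w1 - w2) by lra.
have [d0|] := ltP w2 w1; last first.
  move=> w12; have e1 : w1 = w2 by apply/eqP; rewrite eq_le w12 (le_trans wu uw1).
  have e2 : u1 = w1 by apply/eqP; rewrite eq_le uw1 e1 wu.
  by rewrite e2 !subrr mulr0 mul0r.
have dp : 0 < w1 - w2 by rewrite subr_gt0.
have p1 : 0 <= w1 - u1 by rewrite subr_ge0.
have p2 : 0 <= w2 - u2 by rewrite subr_ge0.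
have h1 := ler_wpM2r p1 i.
have h2 := ler_wpM2r p2 ii.
rewrite -(ler_pM2r dp).
lra.
Qed.
End P.
Arguments psi_le_inv {R psi phi} _ _ {A B}. Arguments phi_ge0 {R psi phi} _ {u}.
Arguments psi_phi {R psi phi} _ {u}. Arguments phi_anti {R psi phi} _ _ {u v}.
Arguments G_ge0 {R psi phi} _ {v}. Arguments G_mono {R psi phi} _ _ {v w}.
Arguments G_convex {R psi phi} _ _ _ {x y t}. Arguments G_3pt {R psi phi} _ _ _ {a b c}.
Arguments G_4pt {R psi phi} _ _ _ {u2 w2 u1 w1}. Arguments phi_G {R phi} {u}.

Lemma comb {R : realType} (A B x y na nb : R) : 0 <= A -> 0 <= B -> 0 <= x -> 0 <= y ->
  0 < na -> 0 <= nb -> (x = 0 -> A = 0) -> A * y <= B * x -> nb * x <= na * y ->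
  nb * A <= na * B.
Proof.
move=> A0 B0 x0 y0 na0 nb0 hx hAB hn.
have [y0'|] := ltP 0 y; last first.
  move=> y0''; have ey : y = 0 by apply/eqP; rewrite eq_le y0'' y0.
  rewrite ey mulr0 in hn.
  have : nb * x = 0 by apply/eqP; rewrite eq_le hn mulr_ge0.
  move=> /eqP; rewrite mulf_eq0 => /orP [/eqP -> | /eqP /hx ->].
    by rewrite mul0r mulr_ge0 // ltW.
  by rewrite mulr0 mulr_ge0 // ltW.
rewrite -(ler_pM2r y0').
have h1 : nb * A * y <= nb * (B * x) by rewrite -mulrA ler_wpM2l.
have h2 : nb * (B * x) <= na * y * B.
  by rewrite mulrCA [_ * B]mulrC ler_wpM2l.
apply: (le_trans h1); apply: (le_trans h2).
by rewrite mulrAC.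
Qed.
Section C.
Variable R : realType.

Lemma core (psi phi Fa fa Fb fb rho : R -> R) (na nb : nat) (pa pb qa qb : R) :
  (forall x y, 0 <= x -> x <= y -> psi y <= psi x) -> log_convex psi ->
  is_inverse_gen psi phi ->
  abs_cont_df Fa fa -> abs_cont_df Fb fb ->
  (forall x z, 0 < x -> x <= z -> rho z <= rho x) -> (forall x, 0 < x -> 0 <= rho x) ->
  (forall x, 0 < x -> 0 < Fa x -> rho x * Fa x <= fa x) ->
  (forall x, 0 < x -> 0 < Fb x -> fb x <= rho x * Fb x) ->
  (0 < na)%N ->
  0 < pa -> pa <= qa -> qa <= qb ->
  na%:R * pa + nb%:R * pb <= na%:R * qa + nb%:R * qb ->
  0 < Fa pa -> 0 < Fb pb -> Fa qa <= 1 -> Fb qb <= 1 -> Fb pb <= 1 ->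
  0 < Fb qb /\
  na%:R * phi (Fa qa) + nb%:R * phi (Fb qb) <= na%:R * phi (Fa pa) + nb%:R * phi (Fb pb).
Proof.
move=> hdec hlc hinv hA hB rd r0 ha hb na0 pa0 paqa qaqb hsum Fap Fbp Faq1 Fbq1 Fbp1.
have Fapq := acd_mono hA paqa.
have Faq0 : 0 < Fa qa by apply: lt_le_trans Fapq.
have nar : 0 < na%:R :> R by rewrite ltr0n.
have nbr : 0 <= nb%:R :> R by rewrite ler0n.
have qb0 : 0 < qb by apply: lt_le_trans pa0 (le_trans paqa qaqb).
have [pbqb|qbpb] := leP pb qb.
  have Fbpq := acd_mono hB pbqb.
  have Fbq0 : 0 < Fb qb by apply: lt_le_trans Fbpq.
  split => //.
  by apply: lerD; [apply: (ler_wpM2l (ltW nar)) | apply: (ler_wpM2l nbr)]; apply: (phi_anti hdec hinv).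
have Fbq0 : 0 < Fb qb.
  apply: (acd_pos_back hB qb0 (ltW qbpb) (r0 qb qb0)) => // y qy yp Fy.
  apply: le_trans (hb y (lt_trans qb0 qy) Fy) _.
  by rewrite ler_wpM2r ?(ltW Fy) // rd // ltW.
split => //.
set a := pa + nb%:R * (pb - qb) / na%:R.
have hna : na%:R * (a - pa) = nb%:R * (pb - qb).
  rewrite /a; field; by rewrite gt_eqF.
have paa : pa <= a.
  rewrite /a lerDl; apply: divr_ge0; last exact: ltW.
  by rewrite mulr_ge0 // subr_ge0 ltW.
have aqa : a <= qa.
  rewrite -(ler_pM2l nar) -subr_ge0.
  have : na%:R * (a - pa) <= na%:R * (qa - pa) by rewrite hna; lra.
  lra.
have aqb : a <= qb by apply: le_trans qaqb.
have a0 : 0 < a by apply: lt_le_trans paa.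
have Faa0 : 0 < Fa a by apply: lt_le_trans Fap (acd_mono hA paa).
have Faa1 : Fa a <= 1 by apply: le_trans (acd_mono hA aqa) Faq1.
have Fap1 : Fa pa <= 1 by apply: le_trans (acd_mono hA paa) Faa1.
have step1 : phi (Fa qa) <= phi (Fa a) by apply: (phi_anti hdec hinv) => //; exact: (acd_mono hA aqa).
suff : nb%:R * (phi (Fb qb) - phi (Fb pb)) <= na%:R * (phi (Fa pa) - phi (Fa a)).
  have := ler_wpM2l (ltW nar) step1; lra.
have Faqb0 : 0 < Fa qb by apply: lt_le_trans Faa0 (acd_mono hA aqb).
have FaFb : Fa qb <= Fb qb := Fle hA hB rd r0 ha hb qb0 Faqb0 Fbq0.
set u1 := - ln (Fa a); set w1 := - ln (Fa pa); set u2 := - ln (Fb pb); set w2 := - ln (Fb qb).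
have u20 : 0 <= u2 by rewrite /u2 oppr_ge0 ln_le0.
have uw2 : u2 <= w2 by rewrite /u2 /w2 lerN2 ler_ln ?posrE // (acd_mono hB (ltW qbpb)).
have wu : w2 <= u1.
  by rewrite /u1 /w2 lerN2 ler_ln ?posrE // (le_trans (acd_mono hA aqb)).
have uw1 : u1 <= w1 by rewrite /u1 /w1 lerN2 ler_ln ?posrE // (acd_mono hA paa).
have h4 := G_4pt hdec hlc hinv u20 uw2 wu uw1.
rewrite (phi_G (u := Fb qb)) // (phi_G (u := Fb pb)) // (phi_G (u := Fa pa)) // (phi_G (u := Fa a)) //.
rewrite -/u1 -/w1 -/u2 -/w2.
apply: (comb _ _ (w2 - u2) (w1 - u1)) => //.
- by rewrite subr_ge0; apply: (G_mono hdec hinv) => //.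
- by rewrite subr_ge0; apply: (G_mono hdec hinv) => //; apply: le_trans wu; apply: le_trans uw2.
- by rewrite subr_ge0.
- by rewrite subr_ge0.
- by move=> /eqP; rewrite subr_eq0 => /eqP ->; rewrite subrr.
have hup : ln (Fb pb) - ln (Fb qb) <= rho qb * (pb - qb).
  apply: CG_up (ltW qbpb) (r0 qb qb0) _ _.
    by move=> y qy _; apply: lt_le_trans Fbq0 (acd_mono hB qy).
  move=> x y qx xy yp.
  have x0 : 0 < x by apply: lt_le_trans qx.
  apply: le_trans (per_up hB rd r0 hb x0 xy (lt_le_trans Fbq0 (acd_mono hB qx))).
  rewrite ler_wpM2l ?(acd_ge0 hB) // lerD2l lerN2 ler_wpM2r ?subr_ge0 //.
  exact: rd.
have hlow : rho a * (a - pa) <= ln (Fa a) - ln (Fa pa).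
  apply: CG_low paa (r0 a a0) _ _.
    by move=> y py _; apply: lt_le_trans Fap (acd_mono hA py).
  move=> x y px xy ya.
  have x0 : 0 < x by apply: lt_le_trans px.
  apply: le_trans (per_low hA rd r0 ha x0 xy (lt_le_trans Fap (acd_mono hA px))).
  rewrite ler_wpM2l ?(acd_ge0 hA) // lerD2l ler_wpM2r ?subr_ge0 //.
  by apply: rd => //; apply: lt_le_trans xy.
have rqa : rho qb <= rho a by apply: rd.
have e1 : w2 - u2 = ln (Fb pb) - ln (Fb qb) by rewrite /w2 /u2; ring.
have e2 : w1 - u1 = ln (Fa a) - ln (Fa pa) by rewrite /w1 /u1; ring.
rewrite e1 e2.
apply: le_trans (ler_wpM2l nbr hup) _.
rewrite mulrCA -hna mulrCA ler_wpM2l //.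
apply: le_trans hlow; rewrite ler_wpM2r // subr_ge0 //.
Qed.
End C.
Arguments core {R psi phi Fa fa Fb fb rho na nb pa pb qa qb}.
Section S.
Variable R : realType.
Local Open Scope classical_set_scope.

Lemma maxRV_ge0 {T : Type} (n : nat) (X : 'I_n -> T -> R) t : 0 <= maxRV X t.
Proof. exact: bigmax_ge_id. Qed.

Lemma maxRV_le {T : Type} (n : nat) (X : 'I_n -> T -> R) t x : 0 <= x ->
  (maxRV X t <= x) <-> (forall i, X i t <= x).
Proof.
move=> x0; split.
  by move=> /bigmax_leP [_ h] i; apply: h.
by move=> h; apply/bigmax_leP; split => // i _; apply: h.
Qed.

Lemma AX_meas {d} {T : measurableType d} {n : nat} {X : 'I_n -> T -> R} (x : R) :
  (forall i, measurable_fun setT (X i)) -> measurable [set t | forall i, X i t <= x].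
Proof.
move=> mX.
have -> : [set t | forall i, X i t <= x] = \bigcap_(i in [set: 'I_n]) (X i @^-1` `]-oo, x]).
  apply/seteqP; split => t /=.
    by move=> h i _ /=; rewrite in_itv /= h.
  by move=> h i; have := h i I; rewrite /= in_itv /=.
apply: fin_bigcap_measurable; first exact: finite_finset.
move=> i _; rewrite -[X in measurable X]setTI.
exact: (mX i) measurableT _ (measurable_itv _).
Qed.

Lemma st_from {d1 d2} {T1 : measurableType d1} {T2 : measurableType d2}
  (P1 : probability T1 R) (P2 : probability T2 R) (n : nat)
  (X : 'I_n -> T1 -> R) (Y : 'I_n -> T2 -> R) (G1 G2 : nat -> R -> R) (psi phi : R -> R) :
  (forall x y, 0 <= x -> x <= y -> psi y <= psi x) ->
  arch_copula_model P1 X G1 psi phi -> arch_copula_model P2 Y G2 psi phi ->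
  (forall x, 0 <= x -> (forall i : 'I_n, 0 < G1 i x) ->
     (forall i : 'I_n, 0 < G2 i x) /\ 0 <= \sum_(i < n) phi (G2 i x) /\
     \sum_(i < n) phi (G2 i x) <= \sum_(i < n) phi (G1 i x)) ->
  st_le P2 (maxRV Y) P1 (maxRV X).
Proof.
move=> hdec [mX [margX copX]] [mY [margY copY]] key x.
have [x0|x0] := ltP x 0.
  have -> : [set t | x < maxRV Y t] = setT.
    by apply/seteqP; split => t //= _; apply: lt_le_trans x0 (maxRV_ge0 _ _ _).
  have -> : [set t | x < maxRV X t] = setT.
    by apply/seteqP; split => t //= _; apply: lt_le_trans x0 (maxRV_ge0 _ _ _).
  by rewrite !probability_setT.
have eC : forall {d} {T : measurableType d} (Z : 'I_n -> T -> R),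
    [set t | x < maxRV Z t] = ~` [set t | forall i, Z i t <= x].
  move=> d T Z; apply/seteqP; split => t /=.
    by move=> h /(maxRV_le _ Z t x x0); rewrite leNgt h.
  move=> h; rewrite ltNge; apply/negP => /(maxRV_le _ Z t x x0).
  exact: h.
have mAX := AX_meas x mX; have mAY := AX_meas x mY.
rewrite !eC !probability_setC //.
apply: leeB => //.
have [hpos|hneg] := pselect (forall i : 'I_n, 0 < G1 i x).
  have [hposY [s0 sle]] := key x x0 hpos.
  rewrite (copX (fun _ => x) hpos) (copY (fun _ => x) hposY) lee_fin.
  apply: hdec => //.
have [i hi] : exists i : 'I_n, ~ (0 < G1 i x).
  by apply/existsNP => h; apply: hneg => i; move: (h i); case: (0 < G1 i x) => // hh; exfalso; apply: hh.
have mXi : measurable [set t | X i t <= x].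
  rewrite -[X in measurable X]setTI.
  have -> : [set t | X i t <= x] = X i @^-1` `]-oo, x].
    by apply/seteqP; split => t /=; rewrite in_itv.
  exact: (mX i) measurableT _ (measurable_itv _).
have h0 : (P1 [set t | forall i, (X i t <= x)%R] <= 0)%E.
  apply: (@le_trans _ _ (P1 [set t | X i t <= x])).
    apply: le_measure; rewrite ?inE //.
    by move=> t /(_ i).
  by rewrite margX lee_fin leNgt; apply/negP.
apply: le_trans h0 _; exact: measure_ge0.
Qed.
End S.
Arguments st_from {R d1 d2 T1 T2 P1 P2 n X Y G1 G2 psi phi}.
Section L.
Variable R : realType.

Lemma sum_mix (phi F1 F2 : R -> R) (n1 n2 : nat) (l1 l2 x : R) :
  \sum_(i < n1 + n2) phi (mix_df F1 F2 n1 l1 l2 i x) =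
  n1%:R * phi (F1 (l1 * x)) + n2%:R * phi (F2 (l2 * x)).
Proof.
rewrite big_split_ord /=.
have e1 : \sum_(i < n1) phi (mix_df F1 F2 n1 l1 l2 (lshift n2 i) x) =
    \sum_(i < n1) phi (F1 (l1 * x)).
  by apply: eq_bigr => i _; rewrite /mix_df /= ltn_ord.
have e2 : \sum_(i < n2) phi (mix_df F1 F2 n1 l1 l2 (rshift n1 i) x) =
    \sum_(i < n2) phi (F2 (l2 * x)).
  by apply: eq_bigr => i _; rewrite /mix_df /= ltnNge leq_addr.
by rewrite e1 e2 !sumr_const !card_ord !mulr_natl.
Qed.

Lemma sorted_nseq_cat (k : nat) (a : R) (t : seq R) :
  all (fun y => a <= y) t -> sorted <=%R t -> sorted <=%R (nseq k a ++ t).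
Proof.
move=> ha st; elim: k => [|k IH] //=.
rewrite (path_sortedE (@le_trans _ R)) IH andbT all_cat ha andbT.
by apply/allP => y /nseqP [-> _].
Qed.

Lemma sum_nth_nseq (k1 k2 : nat) (a b : R) :
  \sum_(i < k1 + k2) nth 0 (nseq k1 a ++ nseq k2 b) i = k1%:R * a + k2%:R * b.
Proof.
rewrite big_split_ord /=.
have e1 : \sum_(i < k1) nth 0 (nseq k1 a ++ nseq k2 b) (lshift k2 i) = \sum_(i < k1) a.
  by apply: eq_bigr => i _; rewrite /= nth_cat size_nseq ltn_ord nth_nseq ltn_ord.
have e2 : \sum_(i < k2) nth 0 (nseq k1 a ++ nseq k2 b) (rshift k1 i) = \sum_(i < k2) b.
  apply: eq_bigr => i _; rewrite /= nth_cat size_nseq ltnNge leq_addr /=.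
  by rewrite addKn nth_nseq ltn_ord.
by rewrite e1 e2 !sumr_const !card_ord !mulr_natl.
Qed.

Lemma wsup_ext (a b c d : R) (k1 k2 : nat) : (0 < k1)%N -> a <= b -> c <= d ->
  wsupmaj (nseq k1 a ++ nseq k2 b) (nseq k1 c ++ nseq k2 d) ->
  a <= c /\ k1%:R * a + k2%:R * b <= k1%:R * c + k2%:R * d.
Proof.
move=> k0 ab cd [_ hw].
have s1 : sort <=%R (nseq k1 a ++ nseq k2 b) = nseq k1 a ++ nseq k2 b.
  apply: (sorted_sort (@le_trans _ R)); apply: sorted_nseq_cat.
    by apply/allP => y /nseqP [-> _].
  by rewrite -[nseq k2 b]cats0; apply: sorted_nseq_cat.
have s2 : sort <=%R (nseq k1 c ++ nseq k2 d) = nseq k1 c ++ nseq k2 d.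
  apply: (sorted_sort (@le_trans _ R)); apply: sorted_nseq_cat.
    by apply/allP => y /nseqP [-> _].
  by rewrite -[nseq k2 d]cats0; apply: sorted_nseq_cat.
rewrite s1 s2 size_cat !size_nseq in hw.
split.
  have := hw 1%N; rewrite !big_ord1.
  case: k1 k0 {hw s1 s2} => // k1 _ /=.
  by apply; rewrite addSn.
by have := hw (k1 + k2)%N (leqnn _); rewrite !sum_nth_nseq.
Qed.

Lemma wsup_perm (a a' b b' : seq R) : perm_eq a a' -> perm_eq b b' ->
  wsupmaj a b -> wsupmaj a' b'.
Proof.
move=> pa pb [hs hw].
have ea : sort <=%R a = sort <=%R a'.
  by apply/perm_sortP => //; [exact: le_total | exact: le_trans | exact: le_anti].
have eb : sort <=%R b = sort <=%R b'.
  by apply/perm_sortP => //; [exact: le_total | exact: le_trans | exact: le_anti].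
split; first by rewrite -(perm_size pa) -(perm_size pb).
by move=> l; rewrite -ea -eb -(perm_size pa); apply: hw.
Qed.
End L.
Arguments wsup_ext {R a b c d k1 k2}. Arguments wsup_perm {R a a' b b'}.
Section G.
Variable R : realType.
Local Open Scope classical_set_scope.

Lemma rho_ex (Fa fa Fb fb : R -> R) : abs_cont_df Fa fa -> abs_cont_df Fb fb ->
  (decreasing_pos (rev_hazard Fa fa) \/ decreasing_pos (rev_hazard Fb fb)) ->
  (forall x, 0 < x -> rev_hazard Fb fb x <= rev_hazard Fa fa x) ->
  exists rho : R -> R, (forall x z, 0 < x -> x <= z -> rho z <= rho x) /\
    (forall x, 0 < x -> 0 <= rho x) /\
    (forall x, 0 < x -> 0 < Fa x -> rho x * Fa x <= fa x) /\
    (forall x, 0 < x -> 0 < Fb x -> fb x <= rho x * Fb x).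
Proof.
move=> hA hB hd hr.
have id : forall (F f : R -> R) (x : R), abs_cont_df F f -> 0 < F x -> rev_hazard F f x * F x = f x.
  by move=> F f x hF Fx; rewrite /rev_hazard divfK //; exact: lt0r_neq0.
have r0 : forall (F f : R -> R) (x : R), abs_cont_df F f -> 0 <= rev_hazard F f x.
  move=> F f x hF; rewrite /rev_hazard divr_ge0 //; first by case: hF => _ [].
  exact: (acd_ge0 hF).
case: hd => [d1|d2].
  exists (rev_hazard Fa fa); split => //; split; first by move=> x _; exact: (r0 _ _ x hA).
  split; first by move=> x _ Fx; rewrite (id _ _ _ hA Fx).
  move=> x x0 Fx; rewrite -(id _ _ _ hB Fx); apply: ler_wpM2r; [exact: ltW | exact: hr].
exists (rev_hazard Fb fb); split => //; split; first by move=> x _; exact: (r0 _ _ x hB).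
split; last by move=> x _ Fx; rewrite (id _ _ _ hB Fx).
move=> x x0 Fx; rewrite -(id _ _ _ hA Fx); apply: ler_wpM2r; [exact: ltW | exact: hr].
Qed.

Lemma fin_gen {d1 d2} {T1 : measurableType d1} {T2 : measurableType d2}
  (P1 : probability T1 R) (P2 : probability T2 R) (n1 n2 : nat)
  (psi phi F1 F2 f1 f2 : R -> R) (l1 l2 m1 m2 : R)
  (X : 'I_(n1 + n2) -> T1 -> R) (Y : 'I_(n1 + n2) -> T2 -> R) :
  (1 <= n1)%N -> (1 <= n2)%N ->
  (forall x y, 0 <= x -> x <= y -> psi y <= psi x) -> is_inverse_gen psi phi ->
  abs_cont_df F1 f1 -> abs_cont_df F2 f2 ->
  arch_copula_model P1 X (mix_df F1 F2 n1 l1 l2) psi phi ->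
  arch_copula_model P2 Y (mix_df F1 F2 n1 m1 m2) psi phi ->
  (forall x, 0 < x -> 0 < F1 (l1 * x) -> 0 < F2 (l2 * x) -> F1 (m1 * x) <= 1 ->
     F2 (m2 * x) <= 1 -> F1 (l1 * x) <= 1 -> F2 (l2 * x) <= 1 ->
     0 < F1 (m1 * x) /\ 0 < F2 (m2 * x) /\
     n1%:R * phi (F1 (m1 * x)) + n2%:R * phi (F2 (m2 * x)) <=
     n1%:R * phi (F1 (l1 * x)) + n2%:R * phi (F2 (l2 * x))) ->
  st_le P2 (maxRV Y) P1 (maxRV X).
Proof.
move=> n1p n2p hdec hinv hF1 hF2 hmX hmY H.
apply: (st_from hdec hmX hmY) => x x0 hpos.
have [mX [margX _]] := hmX; have [mY [margY _]] := hmY.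
pose i1 : 'I_(n1 + n2) := lshift n2 (Ordinal n1p).
pose i2 : 'I_(n1 + n2) := rshift n1 (Ordinal n2p).
have e1 : forall a b y, mix_df F1 F2 n1 a b i1 y = F1 (a * y).
  by move=> a b y; rewrite /mix_df /= n1p.
have e2 : forall a b y, mix_df F1 F2 n1 a b i2 y = F2 (b * y).
  by move=> a b y; rewrite /mix_df /= ltnNge leq_addr.
have le1 : forall {d} {T : measurableType d} (P : probability T R) (Z : 'I_(n1 + n2) -> T -> R) G i,
    (forall i, measurable_fun setT (Z i)) ->
    (forall i y, P [set t | Z i t <= y] = (G i y)%:E) -> G i x <= 1.
  move=> d T P Z G i mZ mg; rewrite -lee_fin -mg probability_le1 //.
  rewrite -[X in measurable X]setTI.
  have -> : [set t | Z i t <= x] = Z i @^-1` `]-oo, x].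
    by apply/seteqP; split => t /=; rewrite in_itv.
  exact: (mZ i) measurableT _ (measurable_itv _).
have pl1 := hpos i1; rewrite e1 in pl1.
have pl2 := hpos i2; rewrite e2 in pl2.
have xp : 0 < x.
  rewrite lt_neqAle x0 andbT; apply/negP => /eqP ex.
  by move: pl1; rewrite -ex mulr0 (acd_F0 hF1) ltxx.
have q1 := le1 _ _ P2 Y _ i1 mY margY; rewrite e1 in q1.
have q2 := le1 _ _ P2 Y _ i2 mY margY; rewrite e2 in q2.
have p1 := le1 _ _ P1 X _ i1 mX margX; rewrite e1 in p1.
have p2 := le1 _ _ P1 X _ i2 mX margX; rewrite e2 in p2.
have [m1p [m2p ineq]] := H x xp pl1 pl2 q1 q2 p1 p2.
have hposY : forall i : 'I_(n1 + n2), 0 < mix_df F1 F2 n1 m1 m2 i x.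
  by move=> i; rewrite /mix_df; case: ifP.
split => //; rewrite !sum_mix; split => //.
by rewrite addr_ge0 // mulr_ge0 ?ler0n // (phi_ge0 hinv).
Qed.
End G.
Arguments rho_ex {R Fa fa Fb fb}. Arguments fin_gen {R d1 d2 T1 T2 P1 P2 n1 n2 psi phi F1 F2 f1 f2 l1 l2 m1 m2 X Y}.
Theorem corollary3p1 (R : realType) (n1 n2 : nat)
  (psi phi : R -> R) (F1 F2 f1 f2 : R -> R) (l1 l2 m1 m2 : R)
  (d1 d2 : measure_display) (T1 : measurableType d1) (T2 : measurableType d2)
  (P1 : probability T1 R) (P2 : probability T2 R)
  (X : 'I_(n1 + n2) -> T1 -> R) (Y : 'I_(n1 + n2) -> T2 -> R) :
  (1 <= n1)%N -> (1 <= n2)%N ->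
  arch_generator (n1 + n2) psi -> log_convex psi -> is_inverse_gen psi phi ->
  abs_cont_df F1 f1 -> abs_cont_df F2 f2 ->
  0 < l1 -> 0 < l2 -> 0 < m1 -> 0 < m2 ->
  (forall i t, 0 <= X i t) -> (forall i t, 0 <= Y i t) ->
  arch_copula_model P1 X (mix_df F1 F2 n1 l1 l2) psi phi ->
  arch_copula_model P2 Y (mix_df F1 F2 n1 m1 m2) psi phi ->
  let lstar := nseq n1 l1 ++ nseq n2 l2 in
  let mstar := nseq n1 m1 ++ nseq n2 m2 in
  let r1 := rev_hazard F1 f1 in
  let r2 := rev_hazard F2 f2 in
  let concl := st_le P2 (maxRV Y) P1 (maxRV X) in
  (* case (a) *)
  ((n2 <= n1)%N -> l1 <= l2 -> m1 <= m2 ->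
     ((decreasing_pos r1 \/ decreasing_pos r2) ->
        (forall x, 0 < x -> r2 x <= r1 x) ->
        wsupmaj lstar mstar -> concl) /\
     ((forall x, 0 < x -> r1 x = r2 x) -> decreasing_pos r1 ->
        wsupmaj lstar mstar -> concl)) /\
  (* case (b) *)
  ((n1 <= n2)%N -> l2 <= l1 -> m2 <= m1 ->
     ((decreasing_pos r1 \/ decreasing_pos r2) ->
        (forall x, 0 < x -> r1 x <= r2 x) ->
        wsupmaj lstar mstar -> concl) /\
     ((forall x, 0 < x -> r1 x = r2 x) -> decreasing_pos r1 ->
        wsupmaj lstar mstar -> concl)).
Proof.
move=> n1p n2p hgen hlc hinv hF1 hF2 l10 l20 m10 m20 X0 Y0 hmX hmY lstar mstar r1 r2 concl.
have hdec : forall x y : R, 0 <= x -> x <= y -> psi y <= psi x := hgen.2.1.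
have caseA : (exists rho : R -> R, (forall x z, 0 < x -> x <= z -> rho z <= rho x) /\
    (forall x, 0 < x -> 0 <= rho x) /\
    (forall x, 0 < x -> 0 < F1 x -> rho x * F1 x <= f1 x) /\
    (forall x, 0 < x -> 0 < F2 x -> f2 x <= rho x * F2 x)) ->
    l1 <= m1 -> n1%:R * l1 + n2%:R * l2 <= n1%:R * m1 + n2%:R * m2 -> m1 <= m2 -> concl.
  move=> [rho [rd [r0 [ha hb]]]] lm sumc mm.
  apply: (fin_gen n1p n2p hdec hinv hF1 hF2 hmX hmY) => x xp pl1 pl2 q1 q2 p1 p2.
  have sx : n1%:R * (l1 * x) + n2%:R * (l2 * x) <= n1%:R * (m1 * x) + n2%:R * (m2 * x).
    by have := ler_wpM2r (ltW xp) sumc; rewrite !mulrDl -!mulrA.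
  have [Fq2 ineq] := core hdec hlc hinv hF1 hF2 rd r0 ha hb n1p (mulr_gt0 l10 xp)
    (ler_wpM2r (ltW xp) lm) (ler_wpM2r (ltW xp) mm) sx pl1 pl2 q1 q2 p2.
  split; last by split.
  by apply: lt_le_trans pl1 (acd_mono hF1 (ler_wpM2r (ltW xp) lm)).
have caseB : (exists rho : R -> R, (forall x z, 0 < x -> x <= z -> rho z <= rho x) /\
    (forall x, 0 < x -> 0 <= rho x) /\
    (forall x, 0 < x -> 0 < F2 x -> rho x * F2 x <= f2 x) /\
    (forall x, 0 < x -> 0 < F1 x -> f1 x <= rho x * F1 x)) ->
    l2 <= m2 -> n2%:R * l2 + n1%:R * l1 <= n2%:R * m2 + n1%:R * m1 -> m2 <= m1 -> concl.
  move=> [rho [rd [r0 [ha hb]]]] lm sumc mm.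
  apply: (fin_gen n1p n2p hdec hinv hF1 hF2 hmX hmY) => x xp pl1 pl2 q1 q2 p1 p2.
  have sx : n2%:R * (l2 * x) + n1%:R * (l1 * x) <= n2%:R * (m2 * x) + n1%:R * (m1 * x).
    by have := ler_wpM2r (ltW xp) sumc; rewrite !mulrDl -!mulrA.
  have [Fq1 ineq] := core hdec hlc hinv hF2 hF1 rd r0 ha hb n2p (mulr_gt0 l20 xp)
    (ler_wpM2r (ltW xp) lm) (ler_wpM2r (ltW xp) mm) sx pl2 pl1 q2 q1 p1.
  split => //; split.
    by apply: lt_le_trans pl2 (acd_mono hF2 (ler_wpM2r (ltW xp) lm)).
  by rewrite addrC [X in _ <= X]addrC.
split.
  move=> n21 l12 m12; split.
    move=> hd hr hw; have [lm sumc] := wsup_ext n1p l12 m12 hw.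
    by apply: caseA => //; exact: rho_ex hF1 hF2 hd hr.
  move=> he hd hw; have [lm sumc] := wsup_ext n1p l12 m12 hw.
  apply: caseA => //; apply: rho_ex hF1 hF2 (or_introl hd) _.
  by move=> x x0; rewrite /r1 /r2 in he; rewrite (he x x0).
move=> n12 l21 m21.
have hw' : wsupmaj lstar mstar ->
    wsupmaj (nseq n2 l2 ++ nseq n1 l1) (nseq n2 m2 ++ nseq n1 m1).
  by rewrite /lstar /mstar; apply: wsup_perm; rewrite perm_catC.
split.
  move=> hd hr /hw' hw; have [lm sumc] := wsup_ext n2p l21 m21 hw.
  apply: caseB => //; apply: rho_ex hF2 hF1 _ hr.
  by case: hd; [right | left].
move=> he hd /hw' hw; have [lm sumc] := wsup_ext n2p l21 m21 hw.
apply: caseB => //; apply: rho_ex hF2 hF1 (or_intror hd) _.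
by move=> x x0; rewrite /r1 /r2 in he; rewrite (he x x0).
Qed.
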